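(* Let $f,g\colon\mathbb R\to\mathbb R$ be smooth functions with $f'(x)g'(y)<0$ and $f(x)\neq g(y)$ for all $(x,y)\in\mathbb R^2$, and let $\epsilon>0$. Define \[ h_\epsilon(x,t)=-\frac{(f(u_-+\epsilon)-g(u_++\epsilon))(f(u_--\epsilon)-g(u_+-\epsilon))}{(f(u_-+\epsilon)-f(u_--\epsilon))(g(u_++\epsilon)-g(u_+-\epsilon))},\qquad u_\pm=x\pm t . \] Then for all $(x,t)\in\mathbb R^2$ \[ h_\epsilon(x,t+\epsilon)\,h_\epsilon(x,t-\epsilon)=\bigl(1+h_\epsilon(x+\epsilon,t)\bigr)\bigl(1+h_\epsilon(x-\epsilon,t)\bigr), \] so that $\chi_{m,n}:=h_\epsilon(m\epsilon,n\epsilon)$, $(m,n)\in\mathbb Z^2$, solves the discrete Liouville equation $\chi_{m,n-1}\chi_{m,n+1}=(1+\chi_{m-1,n})(1+\chi_{m+1,n})$. Moreover $\ell(x,t)=\lim_{\epsilon\to0}\epsilon^2h_\epsilon(x,t)$ exists and $e^{\phi(x,t)}:=1/\ell(x,t)$ is given by $e^{\phi}=-4\,f'(u_-)g'(u_+)/(f(u_-)-g(u_+))^2$, which solves $\partial_t^2\phi-\partial_x^2\phi=-2e^{\phi}$. *)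

(* Defs.v *)
From Stdlib Require Import Reals.
Open Scope R_scope.

Definition smooth (f : R -> R) : Prop :=
  exists D : nat -> R -> R,
    D 0%nat = f /\ forall (n : nat) (x : R), derivable_pt_lim (D n) x (D (S n) x).

Definition h_eps (f g : R -> R) (eps x t : R) : R :=
  let um := x - t in
  let up := x + t in
  - ((f (um + eps) - g (up + eps)) * (f (um - eps) - g (up - eps)))
    / ((f (um + eps) - f (um - eps)) * (g (up + eps) - g (up - eps))).

Definition liouville_sol (phi : R -> R -> R) : Prop :=
  exists phi_t phi_tt phi_x phi_xx : R -> R -> R,
    forall x t : R,
      derivable_pt_lim (fun s => phi x s) t (phi_t x t) /\
      derivable_pt_lim (fun s => phi_t x s) t (phi_tt x t) /\
      derivable_pt_lim (fun y => phi y t) x (phi_x x t) /\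
      derivable_pt_lim (fun y => phi_x y t) x (phi_xx x t) /\
      phi_tt x t - phi_xx x t = -2 * exp (phi x t).

(* Main.v *)
Require Import Defs.
From Stdlib Require Import Reals Lra Psatz FunctionalExtensionality.
Open Scope R_scope.

Lemma D_ext F G x l : (forall s, F s = G s) -> derivable_pt_lim F x l -> derivable_pt_lim G x l.
Proof. intros H; replace G with F; auto. apply functional_extensionality; auto. Qed.
Lemma D_const c x : derivable_pt_lim (fun _ => c) x 0.
Proof. apply (derivable_pt_lim_const c x). Qed.
Lemma D_id x : derivable_pt_lim (fun s => s) x 1.
Proof. apply derivable_pt_lim_id. Qed.
Lemma D_plus F G x l1 l2 l : derivable_pt_lim F x l1 -> derivable_pt_lim G x l2 -> l = l1 + l2 ->
  derivable_pt_lim (fun s => F s + G s) x l.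
Proof. intros; subst; apply (derivable_pt_lim_plus F G); auto. Qed.
Lemma D_minus F G x l1 l2 l : derivable_pt_lim F x l1 -> derivable_pt_lim G x l2 -> l = l1 - l2 ->
  derivable_pt_lim (fun s => F s - G s) x l.
Proof. intros; subst; apply (derivable_pt_lim_minus F G); auto. Qed.
Lemma D_mult F G x l1 l2 l : derivable_pt_lim F x l1 -> derivable_pt_lim G x l2 -> l = l1 * G x + F x * l2 ->
  derivable_pt_lim (fun s => F s * G s) x l.
Proof. intros; subst; apply (derivable_pt_lim_mult F G); auto. Qed.
Lemma D_div F G x l1 l2 l : derivable_pt_lim F x l1 -> derivable_pt_lim G x l2 -> G x <> 0 ->
  l = (l1 * G x - l2 * F x) / (G x * G x) ->
  derivable_pt_lim (fun s => F s / G s) x l.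
Proof. intros; subst. replace (G x * G x) with (Rsqr (G x)) by reflexivity.
  apply (derivable_pt_lim_div F G); auto. Qed.
Lemma D_comp F G x l1 l2 l : derivable_pt_lim G x l1 -> derivable_pt_lim F (G x) l2 -> l = l2 * l1 ->
  derivable_pt_lim (fun s => F (G s)) x l.
Proof. intros; subst; apply (derivable_pt_lim_comp G F); auto. Qed.
Lemma D_ln G x l1 l : derivable_pt_lim G x l1 -> 0 < G x -> l = l1 / G x ->
  derivable_pt_lim (fun s => ln (G s)) x l.
Proof. intros H1 H2 H3; subst. apply (D_comp ln G x l1 (/ G x)); [exact H1| apply derivable_pt_lim_ln; auto| unfold Rdiv; ring]. Qed.
Lemma D_xm F x c l : derivable_pt_lim F (c - x) l -> derivable_pt_lim (fun s => F (c - s)) x (- l).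
Proof. intros H. eapply D_comp; [eapply D_minus; [apply D_const|apply D_id|reflexivity]| exact H| ring]. Qed.
Lemma D_xp F x c l : derivable_pt_lim F (c + x) l -> derivable_pt_lim (fun s => F (c + s)) x l.
Proof. intros H. eapply D_comp; [eapply D_plus; [apply D_const|apply D_id|reflexivity]| exact H| ring]. Qed.
Lemma D_mx F x c l : derivable_pt_lim F (x - c) l -> derivable_pt_lim (fun s => F (s - c)) x l.
Proof. intros H. eapply D_comp; [eapply D_minus; [apply D_id|apply D_const|reflexivity]| exact H| ring]. Qed.
Lemma D_px F x c l : derivable_pt_lim F (x + c) l -> derivable_pt_lim (fun s => F (s + c)) x l.
Proof. intros H. eapply D_comp; [eapply D_plus; [apply D_id|apply D_const|reflexivity]| exact H| ring]. Qed.

Lemma lim_ext F G D l l' x0 : (forall x, D x -> F x = G x) -> l = l' -> limit1_in F D l x0 -> limit1_in G D l' x0.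
Proof. intros H1 H2 H3; subst. intros e He. destruct (H3 e He) as [a [Ha Hb]]. exists a; split; auto.
  intros z [Hz1 Hz2]. rewrite <- H1; auto. Qed.

Lemma dq_p F u l : derivable_pt_lim F u l -> limit1_in (fun h => (F (u+h) - F u)/h) (fun h => 0<h) l 0.
Proof. intros H e He. destruct (H e He) as [d Hd]. exists d; split; [apply cond_pos|].
  intros z [Hz1 Hz2]. simpl in *. unfold R_dist in *. rewrite Rminus_0_r in Hz2.
  apply Hd; auto; lra. Qed.
Lemma dq_m F u l : derivable_pt_lim F u l -> limit1_in (fun h => (F (u-h) - F u)/(-h)) (fun h => 0<h) l 0.
Proof. intros H e He. destruct (H e He) as [d Hd]. exists d; split; [apply cond_pos|].
  intros z [Hz1 Hz2]. simpl in *. unfold R_dist in *. rewrite Rminus_0_r in Hz2.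
  replace (u - z) with (u + - z) by ring. apply Hd; [lra|]. rewrite Rabs_Ropp; auto. Qed.
Lemma lim_const c D x0 : limit1_in (fun _ => c) D c x0.
Proof. apply (limit_free (fun _ => c) D 0 x0). Qed.
Lemma cont_p F u l : derivable_pt_lim F u l -> limit1_in (fun h => F (u+h)) (fun h => 0<h) (F u) 0.
Proof. intros H. eapply lim_ext; [| | apply (limit_plus (fun _ => F u) (fun h => h * ((F (u+h) - F u)/h)))].
  3: apply lim_const. 3: apply limit_mul; [apply lim_x| apply dq_p; exact H].
  intros z Hz; simpl. field; lra. ring. Qed.
Lemma cont_m F u l : derivable_pt_lim F u l -> limit1_in (fun h => F (u-h)) (fun h => 0<h) (F u) 0.
Proof. intros H. eapply lim_ext; [| | apply (limit_plus (fun _ => F u) (fun h => (-h) * ((F (u-h) - F u)/(-h))))].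
  3: apply lim_const. 3: apply limit_mul; [apply limit_Ropp, lim_x| apply dq_m; exact H].
  intros z Hz; simpl. field; lra. ring. Qed.
Lemma D_opp F x l1 l : derivable_pt_lim F x l1 -> l = - l1 -> derivable_pt_lim (fun s => - F s) x l.
Proof. intros; subst; apply (derivable_pt_lim_opp F); auto. Qed.
Lemma D_cmul c F x l1 l : derivable_pt_lim F x l1 -> l = c * l1 -> derivable_pt_lim (fun s => c * F s) x l.
Proof. intros H E. eapply D_mult; [apply D_const|exact H|rewrite E; ring]. Qed.

Lemma Lw (w w1 w2 : R -> R) : (forall s, derivable_pt_lim w s (w1 s)) ->
  (forall s, derivable_pt_lim w1 s (w2 s)) -> (forall s, w s <> 0) ->
  (forall s, derivable_pt_lim (fun s => ln (w s * w s)) s (2 * (w1 s / w s))) /\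
  (forall s, derivable_pt_lim (fun s => 2 * (w1 s / w s)) s (2 * ((w2 s * w s - w1 s * w1 s) / (w s * w s)))).
Proof. intros H1 H2 H0; split; intro s.
  - eapply D_ln; [eapply D_mult; [apply H1|apply H1|reflexivity]| |].
    + apply Rsqr_pos_lt; auto.
    + field; auto.
  - eapply D_cmul; [eapply D_div; [apply H2|apply H1|auto|reflexivity]|].
    field; auto.
Qed.

Lemma lnE (a b w : R): a*b<0 -> w<>0 -> ln(-4*a*b/w^2) = ln 4 + /2*ln(a*a) + /2*ln(b*b) - ln(w*w).
Proof. intros Hab Hw.
  assert (Hw2 : 0 < w*w) by (apply Rsqr_pos_lt; auto).
  replace (-4*a*b/w^2) with ((4 * (-(a*b))) * /(w*w)) by (field; auto).
  rewrite ln_mult, ln_mult, ln_Rinv; try lra; try (apply Rinv_0_lt_compat; lra); try nra.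
  replace (ln (a*a)) with (ln (a*a*(b*b)) - ln (b*b)).
  2:{ rewrite (ln_mult (a*a) (b*b)); [ring| |]; nra. }
  replace (a*a*(b*b)) with ((-(a*b))*(-(a*b))) by ring. rewrite (ln_mult (-(a*b)) (-(a*b))); [field|lra|lra].
Qed.

Lemma liou f f' f2 f3 g g' g2 g3
  (Hf1 : forall x, derivable_pt_lim f x (f' x)) (Hf2 : forall x, derivable_pt_lim f' x (f2 x))
  (Hf3 : forall x, derivable_pt_lim f2 x (f3 x))
  (Hg1 : forall x, derivable_pt_lim g x (g' x)) (Hg2 : forall x, derivable_pt_lim g' x (g2 x))
  (Hg3 : forall x, derivable_pt_lim g2 x (g3 x))
  (Hder : forall x y, f' x * g' y < 0) (Hneq : forall x y, f x <> g y) :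
  liouville_sol (fun x t => ln (-4 * f' (x - t) * g' (x + t) / (f (x - t) - g (x + t)) ^ 2)).
Proof.
  assert (f0 : forall x, f' x <> 0). { intros x H. specialize (Hder x 0). rewrite H in Hder. lra. }
  assert (g0 : forall x, g' x <> 0). { intros x H. specialize (Hder 0 x). rewrite H in Hder. lra. }
  assert (W0 : forall x t, f (x - t) - g (x + t) <> 0). { intros x t H. apply (Hneq (x-t) (x+t)). lra. }
  assert (Heq : forall x t, ln (-4 * f' (x - t) * g' (x + t) / (f (x - t) - g (x + t)) ^ 2) =
     ln 4 + /2 * ln (f' (x-t) * f' (x-t)) + /2 * ln (g' (x+t) * g' (x+t))
       - ln ((f (x - t) - g (x + t)) * (f (x - t) - g (x + t)))).
  { intros x t. apply lnE; auto. }
  exists (fun x t => /2 * (2 * (- f2 (x-t) / f' (x-t))) + /2 * (2 * (g2 (x+t) / g' (x+t)))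
            - 2 * ((- f' (x-t) - g' (x+t)) / (f (x - t) - g (x + t)))).
  exists (fun x t => /2 * (2 * ((f3 (x-t) * f' (x-t) - (- f2 (x-t)) * (- f2 (x-t))) / (f' (x-t) * f' (x-t))))
            + /2 * (2 * ((g3 (x+t) * g' (x+t) - g2 (x+t) * g2 (x+t)) / (g' (x+t) * g' (x+t))))
            - 2 * (((f2 (x-t) - g2 (x+t)) * (f (x - t) - g (x + t)) - (- f' (x-t) - g' (x+t)) * (- f' (x-t) - g' (x+t)))
                     / ((f (x - t) - g (x + t)) * (f (x - t) - g (x + t))))).
  exists (fun x t => /2 * (2 * (f2 (x-t) / f' (x-t))) + /2 * (2 * (g2 (x+t) / g' (x+t)))
            - 2 * ((f' (x-t) - g' (x+t)) / (f (x - t) - g (x + t)))).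
  exists (fun x t => /2 * (2 * ((f3 (x-t) * f' (x-t) - f2 (x-t) * f2 (x-t)) / (f' (x-t) * f' (x-t))))
            + /2 * (2 * ((g3 (x+t) * g' (x+t) - g2 (x+t) * g2 (x+t)) / (g' (x+t) * g' (x+t))))
            - 2 * (((f2 (x-t) - g2 (x+t)) * (f (x - t) - g (x + t)) - (f' (x-t) - g' (x+t)) * (f' (x-t) - g' (x+t)))
                     / ((f (x - t) - g (x + t)) * (f (x - t) - g (x + t))))).
  intros x t.
  destruct (Lw (fun s => f' (x - s)) (fun s => - f2 (x - s)) (fun s => f3 (x - s))) as [Ft1 Ft2].
  { intro s. apply D_xm. apply Hf2. }
  { intro s. eapply D_opp; [apply D_xm; apply Hf3| ring]. }
  { intro s. auto. }
  destruct (Lw (fun s => g' (x + s)) (fun s => g2 (x + s)) (fun s => g3 (x + s))) as [Gt1 Gt2].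
  { intro s. apply D_xp. apply Hg2. }
  { intro s. apply D_xp. apply Hg3. }
  { intro s. auto. }
  destruct (Lw (fun s => f (x - s) - g (x + s)) (fun s => - f' (x - s) - g' (x + s)) (fun s => f2 (x - s) - g2 (x + s))) as [Wt1 Wt2].
  { intro s. eapply D_minus; [apply D_xm; apply Hf1| apply D_xp; apply Hg1| ring]. }
  { intro s. eapply D_minus; [eapply D_opp; [apply D_xm; apply Hf2|reflexivity]| apply D_xp; apply Hg2| ring]. }
  { intro s. auto. }
  destruct (Lw (fun y => f' (y - t)) (fun y => f2 (y - t)) (fun y => f3 (y - t))) as [Fx1 Fx2].
  { intro s. apply D_mx. apply Hf2. }
  { intro s. apply D_mx; apply Hf3. }
  { intro s. auto. }
  destruct (Lw (fun y => g' (y + t)) (fun y => g2 (y + t)) (fun y => g3 (y + t))) as [Gx1 Gx2].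
  { intro s. apply D_px. apply Hg2. }
  { intro s. apply D_px. apply Hg3. }
  { intro s. auto. }
  destruct (Lw (fun y => f (y - t) - g (y + t)) (fun y => f' (y - t) - g' (y + t)) (fun y => f2 (y - t) - g2 (y + t))) as [Wx1 Wx2].
  { intro s. eapply D_minus; [apply D_mx; apply Hf1| apply D_px; apply Hg1| ring]. }
  { intro s. eapply D_minus; [apply D_mx; apply Hf2| apply D_px; apply Hg2| ring]. }
  { intro s. auto. }
  split; [|split; [|split; [|split]]].
  - eapply D_ext; [intro s; symmetry; apply Heq|].
    eapply D_minus; [eapply D_plus; [eapply D_plus; [apply D_const| eapply D_cmul; [apply Ft1|reflexivity]|reflexivity]
       | eapply D_cmul; [apply Gt1|reflexivity]| reflexivity]| apply Wt1| ring].
  - eapply D_minus; [eapply D_plus; [eapply D_cmul; [apply Ft2|reflexivity]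
       | eapply D_cmul; [apply Gt2|reflexivity]| reflexivity]| apply Wt2| ring].
  - eapply D_ext; [intro s; symmetry; apply Heq|].
    eapply D_minus; [eapply D_plus; [eapply D_plus; [apply D_const| eapply D_cmul; [apply Fx1|reflexivity]|reflexivity]
       | eapply D_cmul; [apply Gx1|reflexivity]| reflexivity]| apply Wx1| ring].
  - eapply D_minus; [eapply D_plus; [eapply D_cmul; [apply Fx2|reflexivity]
       | eapply D_cmul; [apply Gx2|reflexivity]| reflexivity]| apply Wx2| ring].
  - rewrite exp_ln.
    + specialize (W0 x t). specialize (f0 (x-t)). specialize (g0 (x+t)). field. auto.
    + specialize (W0 x t). specialize (Hder (x-t) (x+t)).
      assert (0 < (f (x - t) - g (x + t)) ^ 2) by (rewrite <- Rsqr_pow2; apply Rsqr_pos_lt; auto).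
      unfold Rdiv. apply Rmult_lt_0_compat; [nra| apply Rinv_0_lt_compat; auto].
Qed.
Lemma alg (am a0 ap bm b0 bp : R): am<>a0 -> a0<>ap -> bm<>b0 -> b0<>bp ->
 (-( (a0-bp)*(am-b0)) / ((a0-am)*(bp-b0))) * (-((ap-b0)*(a0-bm))/((ap-a0)*(b0-bm)))
 = (1 + -((ap-bp)*(a0-b0))/((ap-a0)*(bp-b0))) * (1 + -((a0-b0)*(am-bm))/((a0-am)*(b0-bm))).
Proof. intros. field. repeat split; intro; apply H; lra || (apply H0; lra) || (apply H1; lra) || (apply H2; lra). Qed.

Lemma mono F F' : (forall x, derivable_pt_lim F x (F' x)) -> (forall x, F' x <> 0) ->
  forall a b, a <> b -> F a <> F b.
Proof. intros HF HF0.
  assert (key : forall a b, a < b -> F a <> F b).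
  { intros a b Hab E.
    pose (pr := fun x => exist (fun l => derivable_pt_abs F x l) (F' x) (HF x) : derivable_pt F x).
    destruct (MVT_cor1 F a b pr Hab) as [c [Hc _]]. simpl in Hc.
    rewrite E in Hc. replace (F b - F b) with 0 in Hc by ring.
    symmetry in Hc. apply Rmult_integral in Hc. destruct Hc as [Hc|Hc]; [apply (HF0 c); auto| lra]. }
  intros a b Hab. destruct (Rlt_or_le a b); [apply key; auto|].
  intro E; apply (key b a); [lra| auto]. Qed.

Lemma part1 f g (fn : forall a b, a <> b -> f a <> f b) (gn : forall a b, a <> b -> g a <> g b) :
  forall eps x t, 0 < eps ->
     h_eps f g eps x (t + eps) * h_eps f g eps x (t - eps)
     = (1 + h_eps f g eps (x + eps) t) * (1 + h_eps f g eps (x - eps) t).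
Proof.
  intros eps x t He. unfold h_eps.
  replace (x - (t+eps) + eps) with (x - t) by ring.
  replace (x + (t+eps) + eps) with (x+t+2*eps) by ring.
  replace (x - (t+eps) - eps) with (x-t-2*eps) by ring.
  replace (x + (t+eps) - eps) with (x+t) by ring.
  replace (x - (t-eps) + eps) with (x-t+2*eps) by ring.
  replace (x + (t-eps) + eps) with (x+t) by ring.
  replace (x - (t-eps) - eps) with (x-t) by ring.
  replace (x + (t-eps) - eps) with (x+t-2*eps) by ring.
  replace (x + eps - t + eps) with (x-t+2*eps) by ring.
  replace (x + eps + t + eps) with (x+t+2*eps) by ring.
  replace (x + eps - t - eps) with (x-t) by ring.
  replace (x + eps + t - eps) with (x+t) by ring.
  replace (x - eps - t + eps) with (x-t) by ring.
  replace (x - eps + t + eps) with (x+t) by ring.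
  replace (x - eps - t - eps) with (x-t-2*eps) by ring.
  replace (x - eps + t - eps) with (x+t-2*eps) by ring.
  apply alg; [apply fn|apply fn|apply gn|apply gn]; lra.
Qed.
Lemma limpart f f' g g' (Hf' : forall x, derivable_pt_lim f x (f' x))
  (Hg' : forall y, derivable_pt_lim g y (g' y))
  (fn : forall a b, a <> b -> f a <> f b) (gn : forall a b, a <> b -> g a <> g b)
  (f0 : forall x, f' x <> 0) (g0 : forall x, g' x <> 0) (Hneq : forall x y, f x <> g y) x t :
  exists l, limit1_in (fun e => e ^ 2 * h_eps f g e x t) (fun e => 0 < e) l 0 /\
       l <> 0 /\ / l = -4 * f' (x - t) * g' (x + t) / (f (x - t) - g (x + t)) ^ 2.
Proof.
  exists (-((f (x-t) - g (x+t))*(f (x-t) - g (x+t))) * /((f' (x-t) + f' (x-t))*(g' (x+t) + g' (x+t)))).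
  assert (Hw := Hneq (x-t) (x+t)). assert (Hf0 := f0 (x-t)). assert (Hg0 := g0 (x+t)).
  split; [|split].
  - eapply lim_ext; [| reflexivity|].
    2:{ apply (limit_mul (fun e => -((f(x-t+e)-g(x+t+e))*(f(x-t-e)-g(x+t-e))))
          (fun e => /(( (f(x-t+e)-f (x-t))/e + (f(x-t-e)-f (x-t))/(-e)) * ((g(x+t+e)-g (x+t))/e + (g(x+t-e)-g (x+t))/(-e))))).
        - apply limit_Ropp. apply (limit_mul (fun e => f(x-t+e)-g(x+t+e)) (fun e => f(x-t-e)-g(x+t-e))).
          + apply (limit_minus (fun e => f(x-t+e)) (fun e => g(x+t+e))); eapply cont_p; eauto.
          + apply (limit_minus (fun e => f(x-t-e)) (fun e => g(x+t-e))); eapply cont_m; eauto.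
        - apply limit_inv.
          + apply limit_mul; apply limit_plus; (apply dq_p || apply dq_m); auto.
          + intro H. apply Rmult_integral in H. destruct H; [apply Hf0|apply Hg0]; lra. }
    intros e He. simpl. unfold h_eps.
    assert (A1 : f (x - t + e) - f (x - t - e) <> 0). { intro H; apply (fn (x-t+e) (x-t-e)); lra. }
    assert (A2 : g (x + t + e) - g (x + t - e) <> 0). { intro H; apply (gn (x+t+e) (x+t-e)); lra. }
    field. repeat split; auto; try lra.
    all: intro H; [apply A2 || apply A1]; apply Rmult_eq_reg_l with e; [nra|lra].
  - apply Rmult_integral_contrapositive; split.
    + intro H. apply Hw. nra.
    + apply Rinv_neq_0_compat. intro H. apply Rmult_integral in H. destruct H; [apply Hf0|apply Hg0]; lra.
  - field. repeat split; auto; lra.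
Qed.

Theorem mainTheorem1 (f f' g g' : R -> R)
  (Hf : smooth f) (Hg : smooth g)
  (Hf' : forall x, derivable_pt_lim f x (f' x))
  (Hg' : forall y, derivable_pt_lim g y (g' y))
  (Hder : forall x y, f' x * g' y < 0)
  (Hneq : forall x y, f x <> g y) :
  (* discrete Liouville identity for h_eps *)
  (forall eps x t, 0 < eps ->
     h_eps f g eps x (t + eps) * h_eps f g eps x (t - eps)
     = (1 + h_eps f g eps (x + eps) t) * (1 + h_eps f g eps (x - eps) t)) /\
  (* chi_{m,n} := h_eps(m eps, n eps) solves the discrete Liouville equation *)
  (forall eps, 0 < eps ->
     let chi := fun m n : Z => h_eps f g eps (IZR m * eps) (IZR n * eps) in
     forall m n : Z,
       chi m (n - 1)%Z * chi m (n + 1)%Z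
       = (1 + chi (m - 1)%Z n) * (1 + chi (m + 1)%Z n)) /\
  (* the continuum limit *)
  (let E := fun x t =>
       -4 * f' (x - t) * g' (x + t) / (f (x - t) - g (x + t)) ^ 2 in
   let phi := fun x t => ln (E x t) in
   (forall x t, exists l : R,
       limit1_in (fun e => e ^ 2 * h_eps f g e x t) (fun e => 0 < e) l 0 /\
       l <> 0 /\ exp (phi x t) = / l /\ / l = E x t) /\
   liouville_sol phi).
Proof.
  destruct Hf as [Df [Df0 HDf]]. destruct Hg as [Dg [Dg0 HDg]].
  assert (Ef : f' = Df 1%nat).
  { apply functional_extensionality; intro x. apply uniqueness_limite with f x; [apply Hf'| rewrite <- Df0; apply HDf]. }
  assert (Eg : g' = Dg 1%nat).
  { apply functional_extensionality; intro x. apply uniqueness_limite with g x; [apply Hg'| rewrite <- Dg0; apply HDg]. }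
  assert (Hf2 : forall x, derivable_pt_lim f' x (Df 2%nat x)) by (intro; rewrite Ef; apply HDf).
  assert (Hg2 : forall x, derivable_pt_lim g' x (Dg 2%nat x)) by (intro; rewrite Eg; apply HDg).
  assert (f0 : forall x, f' x <> 0). { intros x H. specialize (Hder x 0). rewrite H in Hder. lra. }
  assert (g0 : forall x, g' x <> 0). { intros x H. specialize (Hder 0 x). rewrite H in Hder. lra. }
  assert (fn := mono f f' Hf' f0). assert (gn := mono g g' Hg' g0).
  assert (P1 := part1 f g fn gn).
  split; [exact P1|split].
  - intros eps He chi m n. unfold chi.
    rewrite minus_IZR, plus_IZR, minus_IZR, plus_IZR.
    replace ((IZR n - 1) * eps) with (IZR n * eps - eps) by ring.
    replace ((IZR n + 1) * eps) with (IZR n * eps + eps) by ring.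
    replace ((IZR m - 1) * eps) with (IZR m * eps - eps) by ring.
    replace ((IZR m + 1) * eps) with (IZR m * eps + eps) by ring.
    rewrite Rmult_comm, P1 by exact He. ring.
  - intros E phi. split.
    + intros x t. destruct (limpart f f' g g' Hf' Hg' fn gn f0 g0 Hneq x t) as [l [H1 [H2 H3]]].
      exists l. split; [exact H1|split; [exact H2|split; [|exact H3]]].
      unfold phi, E. rewrite exp_ln; [symmetry; exact H3|].
      specialize (Hneq (x-t) (x+t)). specialize (Hder (x-t) (x+t)).
      assert (0 < (f (x - t) - g (x + t)) ^ 2).
      { rewrite <- Rsqr_pow2; apply Rsqr_pos_lt. intro; apply Hneq; lra. }
      unfold Rdiv. apply Rmult_lt_0_compat; [nra| apply Rinv_0_lt_compat; auto].
    + exact (liou f f' (Df 2%nat) (Df 3%nat) g g' (Dg 2%nat) (Dg 3%nat) Hf' Hf2 (HDf 2%nat) Hg' Hg2 (HDg 2%nat) Hder Hneq).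
Qed.
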